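(* Let $\Omega\subset\mathbb{R}^{4p}\simeq\mathbb{C}^{2p}$ be open. A differentiable function $F:\Omega\to\mathbb{S}$ is q-monogenic in $\Omega$ if and only if $F$ is in $\Omega$ a simultaneous null solution of the four operators $\partial_{\underline z}$, $\partial_{\underline z}^\dagger$, $\partial_{\underline z}^J$ and $\partial_{\underline z}^{\dagger J}$.
   Context: Coordinates on $\mathbb{R}^{4p}$: $(X_1,\dots,X_{4p})=(x_1,y_1,\dots,x_{2p},y_{2p})$, $z_k=x_k+iy_k$, $\partial_{z_k}=\tfrac12(\partial_{x_k}-i\partial_{y_k})$, $\partial_{\bar z_k}=\tfrac12(\partial_{x_k}+i\partial_{y_k})$. $\mathbb{C}_{4p}$ is the complex Clifford algebra generated by $e_1,\dots,e_{4p}$ with $e_\alpha e_\beta+e_\beta e_\alpha=-2\delta_{\alpha\beta}$. Witt basis: $\mathfrak f_k=\tfrac12(-e_{2k-1}+ie_{2k})$, $\mathfrak f_k^\dagger=\tfrac12(e_{2k-1}+ie_{2k})$, $k=1,\dots,2p$. $I=\prod_{k=1}^{2p}\mathfrak f_k\mathfrak f_k^\dagger$, spinor space $\mathbb S=\mathbb C_{4p}I$. Operators (acting by left multiplication on $\mathbb S$-valued functions): $\partial_{\underline z}=\sum_{k=1}^{2p}\mathfrak f_k^\dagger\partial_{z_k}$, $\partial_{\underline z}^\dagger=\sum_{k=1}^{2p}\mathfrak f_k\partial_{\bar z_k}$, $\partial_{\underline z}^J=\sum_{j=1}^p(\mathfrak f_{2j-1}\partial_{z_{2j}}-\mathfrak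 f_{2j}\partial_{z_{2j-1}})$, $\partial_{\underline z}^{\dagger J}=\sum_{j=1}^p(\mathfrak f^\dagger_{2j-1}\partial_{\bar z_{2j}}-\mathfrak f^\dagger_{2j}\partial_{\bar z_{2j-1}})$. Define real linear maps: $\mathbb{I}(e_{2k-1})=e_{2k}$, $\mathbb{I}(e_{2k})=-e_{2k-1}$; for $j=1,\dots,p$: $\mathbb{J}(e_{4j-3})=e_{4j-1}$, $\mathbb{J}(e_{4j-2})=-e_{4j}$, $\mathbb{J}(e_{4j-1})=-e_{4j-3}$, $\mathbb{J}(e_{4j})=e_{4j-2}$; $\mathbb K=\mathbb I\mathbb J$. $\underline\partial=\sum_\alpha e_\alpha\partial_{X_\alpha}$, $\underline\partial_M=\sum_\alpha M(e_\alpha)\partial_{X_\alpha}$ for $M\in\{\mathbb I,\mathbb J,\mathbb K\}$. $F$ is q-monogenic in $\Omega$ if $\underline\partial F=\underline\partial_{\mathbb I}F=\underline\partial_{\mathbb J}F=\underline\partial_{\mathbb K}F=0$ there. *)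

(* Defs.v *)
From HB Require Import structures.
From mathcomp Require Import all_boot all_order all_algebra.
From mathcomp Require Import all_classical all_reals.
From mathcomp Require Import topology normedtype derive.
From mathcomp Require Import complex.
From mathcomp Require Import zify.

Set Implicit Arguments.
Unset Strict Implicit.
Unset Printing Implicit Defensive.

Import Order.TTheory GRing.Theory Num.Theory.
Import numFieldNormedType.Exports.
Local Open Scope ring_scope.
Local Open Scope complex_scope.

Section Clifford.
Variable R : realType.
Variable n : nat.

(** The complex Clifford algebra C_n: coefficients (in R[i]) on the basis
    blades e_A, A a subset of {0,..,n-1} (0-indexed generators). *)
Definition clif := {ffun {set 'I_n} -> R[i]}.

Definition cl0 : clif := [ffun => 0].
Definition cladd (x y : clif) : clif := [ffun A => x A + y A].
Definition clopp (x : clif) : clif := [ffun A => - x A].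
Definition clsub (x y : clif) : clif := cladd x (clopp y).
Definition clscale (c : R[i]) (x : clif) : clif := [ffun A => c * x A].
Definition clsum (I : finType) (P : pred I) (f : I -> clif) : clif :=
  [ffun A => \sum_(i | P i) f i A].

Definition blade (A : {set 'I_n}) : clif := [ffun B => (B == A)%:R].
Definition cl1 : clif := blade (finset.set0 : {set 'I_n}).

(** e_A e_B = (-1)^(#{(a,b) in A x B | a > b} + #|A :&: B|) e_(A sym.diff. B),
    which encodes e_a e_b = - e_b e_a (a <> b) and e_a^2 = -1. *)
Definition blade_sign (A B : {set 'I_n}) : R[i] :=
  (-1) ^+ (#|[set ab : 'I_n * 'I_n | (ab.1 \in A) && (ab.2 \in B) &&
                                     (ab.2 < ab.1)%N]| + #|A :&: B|).

Definition clmul (x y : clif) : clif :=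
  [ffun C => \sum_(A : {set 'I_n}) \sum_(B : {set 'I_n} | (A :\: B) :|: (B :\: A) == C)
               blade_sign A B * x A * y B].

Definition gen (a : 'I_n) : clif := blade [set a].

Definition clvec (v : 'I_n -> R) : clif := clsum predT (fun b => clscale (v b)%:C (gen b)).

End Clifford.

Arguments cladd {R n}. Arguments clopp {R n}. Arguments clsub {R n}.
Arguments clscale {R n}. Arguments clsum {R n I}. Arguments blade {R n}.
Arguments clmul {R n}. Arguments gen {R n}. Arguments clvec {R n}.
Arguments blade_sign {R n}.

Lemma ox_proof (p : nat) (k : 'I_(2 * p)) : (k.*2 < 4 * p)%N.
Proof. by case: k => k /= hk; rewrite -muln2; lia. Qed.
Lemma oy_proof (p : nat) (k : 'I_(2 * p)) : (k.*2.+1 < 4 * p)%N.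
Proof. by case: k => k /= hk; rewrite -muln2; lia. Qed.
Lemma oodd_proof (p : nat) (j : 'I_p) : (j.*2 < 2 * p)%N.
Proof. by case: j => j /= hj; rewrite -muln2; lia. Qed.
Lemma oeven_proof (p : nat) (j : 'I_p) : (j.*2.+1 < 2 * p)%N.
Proof. by case: j => j /= hj; rewrite -muln2; lia. Qed.

(** 0-indexed: x_k (paper index 2k-1) and y_k (paper index 2k), k = 1..2p *)
Definition ox (p : nat) (k : 'I_(2 * p)) : 'I_(4 * p) := Ordinal (ox_proof k).
Definition oy (p : nat) (k : 'I_(2 * p)) : 'I_(4 * p) := Ordinal (oy_proof k).
(** paper indices 2j-1 and 2j in {1..2p}, j = 1..p *)
Definition o2jm1 (p : nat) (j : 'I_p) : 'I_(2 * p) := Ordinal (oodd_proof j).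
Definition o2j (p : nat) (j : 'I_p) : 'I_(2 * p) := Ordinal (oeven_proof j).

Section Setting.
Variable R : realType.
Variable p : nat.
Local Notation n := (4 * p)%N.
Local Notation Cl := (clif R n).
Local Notation "x * y" := (clmul x y) : clif_scope.
Delimit Scope clif_scope with C.

Definition witt (k : 'I_(2 * p)) : Cl :=
  clscale (1/2)%:C (cladd (clopp (gen (ox k))) (clscale 'i (gen (oy k)))).
Definition wittd (k : 'I_(2 * p)) : Cl :=
  clscale (1/2)%:C (cladd (gen (ox k)) (clscale 'i (gen (oy k)))).

Definition Iprim : Cl := \big[@clmul R n/cl1 R n]_(k < 2 * p) clmul (witt k) (wittd k).
Definition in_spinor (s : Cl) : Prop := exists y : Cl, s = clmul y Iprim.

(** real linear maps I, J, K on span{e_alpha}: M(e_a) = sum_b M a b e_b.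
    0-indexed: paper e_{2k-1}, e_{2k} are e_(2k-2), e_(2k-1). *)
Definition Imat : 'M[R]_n := \matrix_(a, b)
  if ~~ odd a then ((b : nat) == a.+1)%N%:R else - ((b : nat) == a.-1)%N%:R.
Definition Jmat : 'M[R]_n := \matrix_(a, b)
  if (a %% 4 == 0)%N then ((b : nat) == a + 2)%N%:R
  else if (a %% 4 == 1)%N then - ((b : nat) == a + 2)%N%:R
  else if (a %% 4 == 2)%N then - ((b : nat) == a - 2)%N%:R
  else ((b : nat) == a - 2)%N%:R.
(** K = I o J : K(e_a) = I(J(e_a)) = sum_b J a b I(e_b) *)
Definition Kmat : 'M[R]_n := Jmat *m Imat.

Definition Mapp (M : 'M[R]_n) (a : 'I_n) : Cl := clvec (fun b => M a b).

Definition reF (F : 'rV[R]_n -> Cl) (A : {set 'I_n}) : 'rV[R]_n -> R :=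
  fun X => complex.Re (F X A).
Definition imF (F : 'rV[R]_n -> Cl) (A : {set 'I_n}) : 'rV[R]_n -> R :=
  fun X => complex.Im (F X A).

Definition unitv (a : 'I_n) : 'rV[R]_n := \row_b ((b == a)%:R).

Definition partial (a : 'I_n) (F : 'rV[R]_n -> Cl) (X : 'rV[R]_n) : Cl :=
  [ffun A => Complex ('D_(unitv a) (reF F A) X) ('D_(unitv a) (imF F A) X)].

Definition cl_differentiable (F : 'rV[R]_n -> Cl) (X : 'rV[R]_n) : Prop :=
  forall A, differentiable (reF F A) X /\ differentiable (imF F A) X.

Definition Dirac (F : 'rV[R]_n -> Cl) (X : 'rV[R]_n) : Cl :=
  clsum predT (fun a => clmul (gen a) (partial a F X)).
Definition DiracM (M : 'M[R]_n) (F : 'rV[R]_n -> Cl) (X : 'rV[R]_n) : Cl :=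
  clsum predT (fun a => clmul (Mapp M a) (partial a F X)).

Definition q_monogenic (Omega : set 'rV[R]_n) (F : 'rV[R]_n -> Cl) : Prop :=
  forall X, Omega X ->
    [/\ Dirac F X = cl0 R n, DiracM Imat F X = cl0 R n,
        DiracM Jmat F X = cl0 R n & DiracM Kmat F X = cl0 R n].

Definition dz (k : 'I_(2 * p)) (F : 'rV[R]_n -> Cl) (X : 'rV[R]_n) : Cl :=
  clscale (1/2)%:C (clsub (partial (ox k) F X) (clscale 'i (partial (oy k) F X))).
Definition dzb (k : 'I_(2 * p)) (F : 'rV[R]_n -> Cl) (X : 'rV[R]_n) : Cl :=
  clscale (1/2)%:C (cladd (partial (ox k) F X) (clscale 'i (partial (oy k) F X))).

Definition Dz (F : 'rV[R]_n -> Cl) (X : 'rV[R]_n) : Cl :=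
  clsum predT (fun k => clmul (wittd k) (dz k F X)).
Definition Dzd (F : 'rV[R]_n -> Cl) (X : 'rV[R]_n) : Cl :=
  clsum predT (fun k => clmul (witt k) (dzb k F X)).
Definition DzJ (F : 'rV[R]_n -> Cl) (X : 'rV[R]_n) : Cl :=
  clsum predT (fun j : 'I_p =>
    clsub (clmul (witt (o2jm1 j)) (dz (o2j j) F X))
          (clmul (witt (o2j j)) (dz (o2jm1 j) F X))).
Definition DzdJ (F : 'rV[R]_n -> Cl) (X : 'rV[R]_n) : Cl :=
  clsum predT (fun j : 'I_p =>
    clsub (clmul (wittd (o2jm1 j)) (dzb (o2j j) F X))
          (clmul (wittd (o2j j)) (dzb (o2jm1 j) F X))).

End Setting.

(* Main.v *)
Require Import Defs.
From HB Require Import structures.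
From mathcomp Require Import all_boot all_order all_algebra.
From mathcomp Require Import all_classical all_reals.
From mathcomp Require Import topology normedtype derive.
From mathcomp Require Import complex.
From mathcomp Require Import ring zify.
Import Order.TTheory GRing.Theory Num.Theory.
Import numFieldNormedType.Exports.
Local Open Scope ring_scope.
Local Open Scope complex_scope.

Section Infra.
Variable R : realType.
Variable n : nat.
Local Notation Cl := (clif R n).

Lemma clsumC (I : finType) (f : I -> Cl) C : clsum predT f C = \sum_i f i C.
Proof. by rewrite ffunE. Qed.

Lemma clmulDl (x y z : Cl) : clmul (cladd x y) z = cladd (clmul x z) (clmul y z).
Proof.
apply/ffunP => C; rewrite !ffunE -big_split; apply: eq_bigr => A _.
rewrite -big_split; apply: eq_bigr => B _; rewrite !ffunE /=; ring.
Qed.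
Lemma clmulDr (x y z : Cl) : clmul x (cladd y z) = cladd (clmul x y) (clmul x z).
Proof.
apply/ffunP => C; rewrite !ffunE -big_split; apply: eq_bigr => A _.
rewrite -big_split; apply: eq_bigr => B _; rewrite !ffunE /=; ring.
Qed.
Lemma clmulZl c (x y : Cl) : clmul (clscale c x) y = clscale c (clmul x y).
Proof.
apply/ffunP => C; rewrite !ffunE mulr_sumr; apply: eq_bigr => A _.
rewrite mulr_sumr; apply: eq_bigr => B _; rewrite !ffunE; ring.
Qed.
Lemma clmulZr c (x y : Cl) : clmul x (clscale c y) = clscale c (clmul x y).
Proof.
apply/ffunP => C; rewrite !ffunE mulr_sumr; apply: eq_bigr => A _.
rewrite mulr_sumr; apply: eq_bigr => B _; rewrite !ffunE; ring.
Qed.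
Lemma clmulNl (x y : Cl) : clmul (clopp x) y = clopp (clmul x y).
Proof.
apply/ffunP => C; rewrite !ffunE -sumrN; apply: eq_bigr => A _.
rewrite -sumrN; apply: eq_bigr => B _; rewrite !ffunE; ring.
Qed.
Lemma clmulNr (x y : Cl) : clmul x (clopp y) = clopp (clmul x y).
Proof.
apply/ffunP => C; rewrite !ffunE -sumrN; apply: eq_bigr => A _.
rewrite -sumrN; apply: eq_bigr => B _; rewrite !ffunE; ring.
Qed.

Lemma clscale1 (x : Cl) : clscale (1 : R)%:C x = x.
Proof. by apply/ffunP => A; rewrite ffunE mul1r. Qed.
Lemma clscaleN1 (x : Cl) : clscale (-1 : R)%:C x = clopp x.
Proof.
apply/ffunP => A; rewrite !ffunE.
have -> : ((-1 : R)%:C) = -1 :> R[i] by apply/eqP; rewrite eq_complex /= oppr0 !eqxx.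
by rewrite mulN1r.
Qed.

Lemma Mapp_delta (M : 'M[R]_n) a b0 (s : R) :
  (forall b, M a b = s * (b == b0)%:R) -> clvec (fun b => M a b) = clscale s%:C (gen b0).
Proof.
move=> hM; rewrite /clvec; apply/ffunP => A; rewrite !ffunE (bigD1 b0) //= big1 ?addr0.
  by rewrite hM eqxx mulr1 !ffunE.
by move=> b hb; rewrite hM (negbTE hb) mulr0 ffunE mul0r.
Qed.
End Infra.
Lemma big_double (V : zmodType) n m (lo hi : 'I_m -> 'I_n) (hn : n = m.*2%N)
  (hlo : forall k, val (lo k) = (val k).*2%N) (hhi : forall k, val (hi k) = (val k).*2.+1%N)
  (f : 'I_n -> V) : \sum_a f a = \sum_k (f (lo k) + f (hi k)).
Proof.
pose h (kb : 'I_m * bool) := if kb.2 then hi kb.1 else lo kb.1.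
have hlt : forall a : 'I_n, (a./2 < m)%N by move=> a; rewrite ltn_half_double -hn.
pose g (a : 'I_n) : 'I_m * bool := (Ordinal (hlt a), odd a).
have hgh : cancel h g.
  move=> [k b]; rewrite /h /g /=; case: b => /=.
    by congr pair; [apply: val_inj; rewrite /= hhi /= uphalf_double | rewrite hhi /= odd_double].
  by congr pair; [apply: val_inj; rewrite /= hlo doubleK | rewrite hlo odd_double].
have hhg : cancel g h.
  move=> a; rewrite /h /g /=; apply: val_inj.
  have := odd_double_half a; case: (odd a) => /= ha; rewrite ?hhi ?hlo /=; lia.
rewrite (reindex h) /=; last by exists g => x _; [exact: hgh | exact: hhg].
rewrite -(pair_big xpredT xpredT (fun k b => f (h (k, b)))) /=.
by apply: eq_bigr => k _; rewrite big_bool /= addrC.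
Qed.

Section Ent.
Variable R : realType.
Variable p : nat.
Local Notation n := (4 * p)%N.

Lemma Imat_x k b : Imat R p (ox k) b = 1 * (b == oy k)%:R.
Proof. by rewrite mxE /= odd_double /= mul1r. Qed.
Lemma Imat_y k b : Imat R p (oy k) b = -1 * (b == ox k)%:R.
Proof. by rewrite mxE /= odd_double /= mulN1r. Qed.

Ltac jt := rewrite mxE /=; repeat (case: ifP => ?; try (exfalso; lia)).

Lemma Jmat_x1 j b : Jmat R p (ox (o2jm1 j)) b = 1 * (b == ox (o2j j))%:R.
Proof. jt. by rewrite mul1r (_ : (j.*2.*2 + 2 = j.*2.+1.*2)%N) //; lia. Qed.
Lemma Jmat_y1 j b : Jmat R p (oy (o2jm1 j)) b = -1 * (b == oy (o2j j))%:R.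
Proof. jt. by rewrite mulN1r (_ : (j.*2.*2.+1 + 2 = j.*2.+1.*2.+1)%N) //; lia. Qed.
Lemma Jmat_x2 j b : Jmat R p (ox (o2j j)) b = -1 * (b == ox (o2jm1 j))%:R.
Proof. jt. by rewrite mulN1r (_ : (j.*2.+1.*2 - 2 = j.*2.*2)%N) //; lia. Qed.
Lemma Jmat_y2 j b : Jmat R p (oy (o2j j)) b = 1 * (b == oy (o2jm1 j))%:R.
Proof. jt. by rewrite mul1r (_ : (j.*2.+1.*2.+1 - 2 = j.*2.*2.+1)%N) //; lia. Qed.
End Ent.

Arguments Mapp_delta {R n M a b0 s}.
Arguments Imat_x {R p}. Arguments Imat_y {R p}.
Arguments Jmat_x1 {R p}. Arguments Jmat_y1 {R p}. Arguments Jmat_x2 {R p}. Arguments Jmat_y2 {R p}.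
Arguments big_double {V n m lo hi}.

Lemma C1 (R : realType) : ((1 : R)%:C) = 1 :> R[i].
Proof. by []. Qed.
Lemma CN1 (R : realType) : ((-1 : R)%:C) = -1 :> R[i].
Proof. by apply/eqP; rewrite eq_complex /= oppr0 !eqxx. Qed.

Lemma qtrick (T : comRingType) (j l r q : T) : j * j = -1 -> l - r = (j * j + 1) * q -> l = r.
Proof. by move=> hj h; apply/eqP; rewrite -subr_eq0 h hj addNr mul0r. Qed.

Section Main.
Variable R : realType.
Variable p : nat.
Local Notation n := (4 * p)%N.
Variable F : 'rV[R]_n -> clif R n.
Variable X : 'rV[R]_n.
Local Notation P a := (partial a F X).

Lemma Kmat_row a c0 s : (forall c, Jmat R p a c = s * (c == c0)%:R) ->
  forall b, Kmat R p a b = s * Imat R p c0 b.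
Proof.
move=> hJ b; rewrite /Kmat mxE (bigD1 c0) //= big1 ?addr0.
  by rewrite hJ eqxx mulr1.
by move=> c hc; rewrite hJ (negbTE hc) mulr0 mul0r.
Qed.

Lemma MIx k : Mapp (Imat R p) (ox k) = gen (oy k).
Proof. by rewrite /Mapp (Mapp_delta (Imat_x k)) clscale1. Qed.
Lemma MIy k : Mapp (Imat R p) (oy k) = clopp (gen (ox k)).
Proof. by rewrite /Mapp (Mapp_delta (Imat_y k)) clscaleN1. Qed.
Lemma MJx1 j : Mapp (Jmat R p) (ox (o2jm1 j)) = gen (ox (o2j j)).
Proof. by rewrite /Mapp (Mapp_delta (Jmat_x1 j)) clscale1. Qed.
Lemma MJy1 j : Mapp (Jmat R p) (oy (o2jm1 j)) = clopp (gen (oy (o2j j))).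
Proof. by rewrite /Mapp (Mapp_delta (Jmat_y1 j)) clscaleN1. Qed.
Lemma MJx2 j : Mapp (Jmat R p) (ox (o2j j)) = clopp (gen (ox (o2jm1 j))).
Proof. by rewrite /Mapp (Mapp_delta (Jmat_x2 j)) clscaleN1. Qed.
Lemma MJy2 j : Mapp (Jmat R p) (oy (o2j j)) = gen (oy (o2jm1 j)).
Proof. by rewrite /Mapp (Mapp_delta (Jmat_y2 j)) clscale1. Qed.

Lemma MKx1 j : Mapp (Kmat R p) (ox (o2jm1 j)) = gen (oy (o2j j)).
Proof.
rewrite /Mapp (@Mapp_delta _ _ _ _ (oy (o2j j)) 1) ?clscale1 // => b.
by rewrite (Kmat_row _ _ _ (Jmat_x1 j)) Imat_x !mul1r.
Qed.
Lemma MKy1 j : Mapp (Kmat R p) (oy (o2jm1 j)) = gen (ox (o2j j)).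
Proof.
rewrite /Mapp (@Mapp_delta _ _ _ _ (ox (o2j j)) 1) ?clscale1 // => b.
by rewrite (Kmat_row _ _ _ (Jmat_y1 j)) Imat_y mulrA mulrNN !mul1r.
Qed.
Lemma MKx2 j : Mapp (Kmat R p) (ox (o2j j)) = clopp (gen (oy (o2jm1 j))).
Proof.
rewrite /Mapp (@Mapp_delta _ _ _ _ (oy (o2jm1 j)) (-1)) ?clscaleN1 // => b.
by rewrite (Kmat_row _ _ _ (Jmat_x2 j)) Imat_x mulrA mulr1.
Qed.
Lemma MKy2 j : Mapp (Kmat R p) (oy (o2j j)) = clopp (gen (ox (o2jm1 j))).
Proof.
rewrite /Mapp (@Mapp_delta _ _ _ _ (ox (o2jm1 j)) (-1)) ?clscaleN1 // => b.
by rewrite (Kmat_row _ _ _ (Jmat_y2 j)) Imat_y mulrA mul1r.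
Qed.

Lemma hn1 : n = (2 * p).*2%N. Proof. rewrite -muln2; lia. Qed.
Lemma hn2 : (2 * p)%N = p.*2%N. Proof. rewrite -muln2; lia. Qed.

Lemma sum4 (V : zmodType) (f : 'I_n -> V) : \sum_a f a =
  \sum_k (f (ox k) + f (oy k)).
Proof. exact: (big_double hn1). Qed.
Lemma sum2 (V : zmodType) (f : 'I_(2 * p) -> V) : \sum_k f k =
  \sum_j (f (o2jm1 j) + f (o2j j)).
Proof. exact: (big_double hn2). Qed.


End Main.

Arguments sum4 {p}. Arguments sum2 {p}.
Section Main.
Variable R : realType.
Variable p : nat.
Local Notation n := (4 * p)%N.
Variable F : 'rV[R]_n -> clif R n.
Variable X : 'rV[R]_n.
Local Notation P a := (partial a F X).
Lemma hi : 'i%C * 'i%C = -1 :> R[i].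
Proof. by rewrite -expr2 sqr_i. Qed.

Local Notation h := ((1/2 : R)%:C).

Lemma id1 C : Dz F X C = h * (h * (Dirac F X C + 'i%C * DiracM (Imat R p) F X C)).
Proof.
rewrite /Dz /Dirac /DiracM !clsumC (sum4 _ (fun a => clmul (gen a) (P a) C)).
rewrite (sum4 _ (fun a => clmul (Mapp _ a) (P a) C)).
rewrite mulr_sumr -big_split !mulr_sumr; apply: eq_bigr => k _ /=.
rewrite MIx MIy /wittd /dz /clsub.
rewrite !(clmulDl, clmulDr, clmulZl, clmulZr, clmulNl, clmulNr).
move: (clmul (gen (ox k)) (P (ox k))) (clmul (gen (ox k)) (P (oy k)))
  (clmul (gen (oy k)) (P (ox k))) (clmul (gen (oy k)) (P (oy k))) => a b c d.
rewrite !ffunE.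
eapply (@qtrick _ 'i%C _ _ (- (h * h * d C)) hi). ring.
Qed.

Lemma id2 C : Dzd F X C = h * (h * ('i%C * DiracM (Imat R p) F X C - Dirac F X C)).
Proof.
rewrite /Dzd /Dirac /DiracM !clsumC (sum4 _ (fun a => clmul (gen a) (P a) C)).
rewrite (sum4 _ (fun a => clmul (Mapp _ a) (P a) C)).
rewrite mulr_sumr -sumrB !mulr_sumr; apply: eq_bigr => k _ /=.
rewrite MIx MIy /witt /dzb.
rewrite !(clmulDl, clmulDr, clmulZl, clmulZr, clmulNl, clmulNr).
move: (clmul (gen (ox k)) (P (ox k))) (clmul (gen (ox k)) (P (oy k)))
  (clmul (gen (oy k)) (P (ox k))) (clmul (gen (oy k)) (P (oy k))) => a b c d.
rewrite !ffunE.
eapply (@qtrick _ 'i%C _ _ (h * h * d C) hi). ring.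
Qed.

Lemma reJK (M : 'M[R]_n) C : DiracM M F X C = \sum_j
  ((clmul (Mapp M (ox (o2jm1 j))) (P (ox (o2jm1 j))) C + clmul (Mapp M (oy (o2jm1 j))) (P (oy (o2jm1 j))) C)
  + (clmul (Mapp M (ox (o2j j))) (P (ox (o2j j))) C + clmul (Mapp M (oy (o2j j))) (P (oy (o2j j))) C)).
Proof.
rewrite /DiracM clsumC (sum4 _ (fun a => clmul (Mapp M a) (P a) C)).
exact: (sum2 _ (fun k => clmul (Mapp M (ox k)) (P (ox k)) C + clmul (Mapp M (oy k)) (P (oy k)) C)).
Qed.

Ltac tailJ k1 k2 :=
  rewrite !(clmulDl, clmulDr, clmulZl, clmulZr, clmulNl, clmulNr);
  move: (clmul (gen (ox k1)) (P (ox k2))) (clmul (gen (ox k1)) (P (oy k2)))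
    (clmul (gen (oy k1)) (P (ox k2))) (clmul (gen (oy k1)) (P (oy k2)))
    (clmul (gen (ox k2)) (P (ox k1))) (clmul (gen (ox k2)) (P (oy k1)))
    (clmul (gen (oy k2)) (P (ox k1))) (clmul (gen (oy k2)) (P (oy k1)))
    => u1 u2 u3 u4 v1 v2 v3 v4;
  rewrite !ffunE.

Lemma id3 C : DzJ F X C = h * (h * (DiracM (Jmat R p) F X C - 'i%C * DiracM (Kmat R p) F X C)).
Proof.
rewrite /DzJ clsumC !reJK.
rewrite mulr_sumr -sumrB !mulr_sumr; apply: eq_bigr => j _ /=.
rewrite MJx1 MJy1 MJx2 MJy2 MKx1 MKy1 MKx2 MKy2 /witt /dz /clsub.
tailJ (o2jm1 j) (o2j j).
eapply (@qtrick _ 'i%C _ _ (h * h * (v4 C - u4 C)) hi); ring.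
Qed.

Lemma id4 C : DzdJ F X C = h * (h * (- DiracM (Jmat R p) F X C - 'i%C * DiracM (Kmat R p) F X C)).
Proof.
rewrite /DzdJ clsumC !reJK.
rewrite mulr_sumr -sumrN -sumrB !mulr_sumr; apply: eq_bigr => j _ /=.
rewrite MJx1 MJy1 MJx2 MJy2 MKx1 MKy1 MKx2 MKy2 /wittd /dzb /clsub.
tailJ (o2jm1 j) (o2j j).
eapply (@qtrick _ 'i%C _ _ (h * h * (u4 C - v4 C)) hi); ring.
Qed.
End Main.

Section Fin.
Variable R : realType.
Local Notation h := ((1/2 : R)%:C).

Lemma cl0C n (C : {set 'I_n}) : cl0 R n C = 0.
Proof. by rewrite ffunE. Qed.

Lemma canc (x : R[i]) : 0 = h * (h * x) -> x = 0.
Proof.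
have h0 : h != 0.
  apply/eqP => /(congr1 (@complex.Re R)) /= /eqP.
  by rewrite mul1r invr_eq0 pnatr_eq0.
have hh := mulf_neq0 h0 h0.
move/esym/eqP; rewrite mulrA mulf_eq0 (negbTE hh) /=; by move/eqP.
Qed.

Lemma solve (d e : R[i]) : d + 'i%C * e = 0 -> 'i%C * e - d = 0 -> d = 0 /\ e = 0.
Proof.
move=> e1 e2.
have hd : d * 2%:R = 0.
  have -> : d * 2%:R = (d + 'i%C * e) - ('i%C * e - d) by ring.
  by rewrite e1 e2 subrr.
have hd' : d = 0 by move/eqP: hd; rewrite mulf_eq0 pnatr_eq0 orbF => /eqP.
split => //.
have hie : 'i%C * e = 0 by move: e1; rewrite hd' add0r.
have -> : e = - ('i%C * 'i%C) * e by rewrite (hi R) opprK mul1r.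
by rewrite mulNr -mulrA hie mulr0 oppr0.
Qed.
End Fin.

Theorem proposition2 (R : realType) (p : nat) (Omega : set 'rV[R]_(4 * p))
  (F : 'rV[R]_(4 * p) -> clif R (4 * p)) :
  open Omega ->
  (forall X, Omega X -> in_spinor (F X)) ->
  (forall X, Omega X -> cl_differentiable F X) ->
  (q_monogenic Omega F <->
   (forall X, Omega X ->
      [/\ Dz F X = cl0 R (4 * p), Dzd F X = cl0 R (4 * p),
          DzJ F X = cl0 R (4 * p) & DzdJ F X = cl0 R (4 * p)])).
Proof.
move=> _ _ _; split.
  move=> hq X hX; case: (hq X hX) => h1 h2 h3 h4.
  by split; apply/ffunP => C;
    rewrite ?id1 ?id2 ?id3 ?id4 ?h1 ?h2 ?h3 ?h4 !cl0C; ring.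
move=> hz X hX; case: (hz X hX) => h1 h2 h3 h4.
have A : forall C, Dirac F X C = 0 /\ DiracM (Imat R p) F X C = 0.
  move=> C; apply: solve; apply: canc.
    by rewrite -id1 h1 cl0C.
  by rewrite -id2 h2 cl0C.
have B : forall C, DiracM (Jmat R p) F X C = 0 /\ - DiracM (Kmat R p) F X C = 0.
  move=> C; apply: solve.
    by rewrite mulrN; apply: canc; rewrite -id3 h3 cl0C.
  by rewrite mulrN addrC; apply: canc; rewrite -id4 h4 cl0C.
split; apply/ffunP => C; rewrite cl0C.
- by case: (A C).
- by case: (A C).
- by case: (B C).
- by case: (B C) => _ hK; rewrite -[LHS]opprK hK oppr0.
Qed.
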